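(* Let $1\le m\le n/2$, $\delta>0$ and $s:=m-\delta^2$. If $$s\in\Big]0,\ \frac{m^2}{n}+\frac{2(n-m)^2}{n(n-1)(n+2)}\Big[,$$ then every $\delta$-code $C\subset\mathcal G_{m,n}$ satisfies $$|C|\le\frac nm\cdot\frac{m-s}{-s+\frac{m^2}{n}+\frac{2(n-m)^2}{n(n-1)(n+2)}}.$$
   Context: $\mathcal G_{m,n}$ is the set of $m$-dimensional linear subspaces of $\mathbb R^n$. For $p,q\in\mathcal G_{m,n}$ with principal angles $\theta_1,\dots,\theta_m\in[0,\pi/2]$ (defined recursively: $\theta_1$ is the minimal angle between a line of $p$ and a line of $q$, the rest are the principal angles of the orthogonal complements of these lines in $p$ and $q$), the chordal distance is $d_c(p,q)=\sqrt{\sum_i\sin^2\theta_i}$. A $\delta$-code is a finite $C\subset\mathcal G_{m,n}$ with $d_c(p,q)\ge\delta$ for all distinct $p,q\in C$. *)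

(* Defs.v *)
From HB Require Import structures.
From mathcomp Require Import all_boot all_order all_algebra.
From mathcomp Require Import all_classical all_reals.
From mathcomp Require Import topology normedtype sequences exp trigo.

Set Implicit Arguments.
Unset Strict Implicit.
Unset Printing Implicit Defensive.

Import Order.TTheory GRing.Theory Num.Theory.
Local Open Scope ring_scope.

Section Grassmann.
Variables (R : realType) (n : nat).

(* A linear subspace of R^n is represented by a square matrix whose
   row space is the subspace (mxalgebra). Vectors are row vectors. *)

Definition dotv (u v : 'rV[R]_n) : R := (u *m v^T) 0 0.

Definition unitv (u : 'rV[R]_n) : Prop := dotv u u = 1.

Definition grass (m : nat) (p : 'M[R]_n) : Prop := \rank p = m.

Definition perp_in (p : 'M[R]_n) (u : 'rV[R]_n) : 'M[R]_n :=
  (p :&: kermx u^T)%MS.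

Inductive principal_angles : 'M[R]_n -> 'M[R]_n -> seq R -> Prop :=
| pa_nil p q : \rank p = 0%N -> \rank q = 0%N -> principal_angles p q [::]
| pa_cons p q (u v : 'rV[R]_n) th ths :
    (u <= p)%MS -> (v <= q)%MS -> unitv u -> unitv v ->
    0 <= th <= pi / 2 ->
    cos th = dotv u v ->
    (forall u' v' : 'rV[R]_n, (u' <= p)%MS -> (v' <= q)%MS ->
        unitv u' -> unitv v' -> `|dotv u' v'| <= cos th) ->
    principal_angles (perp_in p u) (perp_in q v) ths ->
    principal_angles p q (th :: ths).

(* Chordal distance d_c(p,q) = sqrt (sum_i sin^2 th_i) where th_i are the
   principal angles of p and q (chosen by description; they are unique). *)
Definition chordal_dist (p q : 'M[R]_n) : R :=
  let ths := xget [::] [set ths | principal_angles p q ths] in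
  Num.sqrt (\sum_(t <- ths) sin t ^+ 2).

Definition delta_code (m k : nat) (delta : R) (C : 'I_k -> 'M[R]_n) : Prop :=
  (forall i, grass m (C i)) /\
  (forall i j, i != j -> ~~ (C i == C j)%MS) /\
  (forall i j, i != j -> delta <= chordal_dist (C i) (C j)).

End Grassmann.

(* Main.v *)
Require Import Defs.
From HB Require Import structures.
From mathcomp Require Import all_boot all_order all_algebra.
From mathcomp Require Import all_classical all_reals.
From mathcomp Require Import topology normedtype sequences exp trigo.
From mathcomp Require Import ring lra.
Import Order.TTheory GRing.Theory Num.Theory.
Local Open Scope ring_scope.
Section A.
Variables (R : realType) (n : nat).
Implicit Types (u v w x : 'rV[R]_n) (p q : 'M[R]_n).

Lemma dotvE u v : dotv u v = \sum_j u 0 j * v 0 j.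
Proof. by rewrite /dotv !mxE; apply: eq_bigr => j _; rewrite mxE. Qed.

Lemma dotvC u v : dotv u v = dotv v u.
Proof. rewrite !dotvE; apply: eq_bigr => j _; exact: mulrC. Qed.

Lemma dotvDl u w v : dotv (u + w) v = dotv u v + dotv w v.
Proof. by rewrite /dotv mulmxDl mxE. Qed.

Lemma dotvZl a u v : dotv (a *: u) v = a * dotv u v.
Proof. by rewrite /dotv -scalemxAl mxE. Qed.

Lemma dotvDr u w v : dotv v (u + w) = dotv v u + dotv v w.
Proof. by rewrite dotvC dotvDl !(dotvC v). Qed.

Lemma dotvZr a u v : dotv v (a *: u) = a * dotv v u.
Proof. by rewrite dotvC dotvZl dotvC. Qed.

Lemma dotv_ge0 u : 0 <= dotv u u.
Proof. by rewrite dotvE; apply: sumr_ge0 => j _; rewrite -expr2 sqr_ge0. Qed.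

Lemma dotv_eq0 u : dotv u u = 0 -> u = 0.
Proof.
rewrite dotvE => h; apply/rowP => j; rewrite mxE.
have /psumr_eq0P H : forall i : 'I_n, true -> 0 <= u 0 i * u 0 i.
  by move=> i _; rewrite -expr2 sqr_ge0.
by have /eqP := H h j isT; rewrite mulf_eq0 orbb => /eqP.
Qed.

Lemma dotv0l v : dotv 0 v = 0.
Proof. by rewrite /dotv mul0mx mxE. Qed.

Lemma var_bound p q v c :
  (v <= q)%MS -> unitv v -> 0 <= c ->
  (forall u' v', (u' <= p)%MS -> (v' <= q)%MS -> unitv u' -> unitv v' -> `|dotv u' v'| <= c) ->
  forall x, (x <= p)%MS -> dotv x v ^+ 2 <= c ^+ 2 * dotv x x.
Proof.
move=> vq uv c0 hmax x xp.
have [/dotv_eq0 -> | nz] := eqVneq (dotv x x) 0.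
  by rewrite dotv0l expr0n /= mulr_ge0 ?sqr_ge0 ?dotv_ge0.
have N0 : 0 < dotv x x by rewrite lt_def nz dotv_ge0.
set r := Num.sqrt (dotv x x).
have r0 : 0 < r by rewrite sqrtr_gt0.
have hx : (r^-1 *: x <= p)%MS by rewrite scalemx_sub.
have hu : unitv (r^-1 *: x).
  rewrite /unitv dotvZl dotvC dotvZl mulrA -expr2 exprVn sqr_sqrtr ?dotv_ge0 //.
  by rewrite mulVf.
have := hmax _ _ hx vq hu uv; rewrite dotvZl.
rewrite normrM gtr0_norm ?invr_gt0 // => h.
have h2 : `|dotv x v| <= c * r.
  by have := ler_wpM2l (ltW r0) h; rewrite mulrA mulfV ?gt_eqF // mul1r mulrC.
have h3 : `|dotv x v| ^+ 2 <= (c * r) ^+ 2.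
  have := normr_ge0 (dotv x v); rewrite !expr2; nra.
by move: h3; rewrite real_normK ?num_real // exprMn sqr_sqrtr ?dotv_ge0.
Qed.


Lemma perp p q u v c : (u <= p)%MS -> (v <= q)%MS -> unitv u -> unitv v -> 0 <= c ->
  c = dotv u v ->
  (forall u' v', (u' <= p)%MS -> (v' <= q)%MS -> unitv u' -> unitv v' -> `|dotv u' v'| <= c) ->
  forall w, (w <= p)%MS -> dotv w u = 0 -> dotv w v = 0.
Proof.
move=> up vq uu uv c0 ce hmax w wp wu.
set b := dotv w v; set ww := dotv w w.
have ww0 : 0 <= ww := dotv_ge0 w.
set e := ww + 1.
have e0 : 0 < e by rewrite /e; apply: ltr_wpDl.
set t := b / e.
set x := c *: u + t *: w.
have xp : (x <= p)%MS by rewrite addmx_sub ?scalemx_sub.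
have := @var_bound p q v c vq uv c0 hmax x xp.
have -> : dotv x v = c * c + t * b by rewrite /x dotvDl !dotvZl -ce.
have -> : dotv x x = c * c + t * t * ww.
  rewrite /x !(dotvDl, dotvDr, dotvZl, dotvZr) (dotvC u w) wu -/ww.
  rewrite /unitv in uu; rewrite uu; ring.
have be : b = t * e by rewrite /t divfK ?gt_eqF.
rewrite be /e => H.
have tt0 : 0 <= t * t by rewrite -expr2 sqr_ge0.
have tw0 : 0 <= t * t * ww by rewrite mulr_ge0.
have cc0 : 0 <= c * c by rewrite -expr2 sqr_ge0.
have : t * t <= 0.
  have h1 : 0 <= c * c * (t * t * ww) by rewrite mulr_ge0.
  have h2 : 0 <= c * c * (t * t) by rewrite mulr_ge0.
  have h3 : 0 <= (t * t * ww) * (t * t) by rewrite mulr_ge0.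
  have h4 : 0 <= (t * t * ww) * (t * t * ww) by rewrite mulr_ge0.
  move: H; rewrite !expr2. nra.
move=> h; have : t * t = 0 by apply/le_anti; rewrite h tt0.
by move/eqP; rewrite mulf_eq0 orbb => /eqP ->; rewrite mul0r.
Qed.

Lemma unit11 u : unitv u -> u *m u^T = 1%:M.
Proof. by move=> h; rewrite [LHS]mx11_scalar; rewrite /unitv /dotv in h; rewrite h. Qed.

Lemma perp_inP p u w : (w <= perp_in p u)%MS -> (w <= p)%MS /\ dotv w u = 0.
Proof.
rewrite /perp_in sub_capmx sub_kermx => /andP[-> /eqP h]; split => //.
by rewrite /dotv h mxE.
Qed.

Lemma rows_perp s (U : 'M[R]_(s, n)) v p :
  (U <= p)%MS -> (forall w, (w <= p)%MS -> dotv w v = 0) -> U *m v^T = 0.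
Proof.
move=> Up h; apply/matrixP => i j; rewrite (ord1 j) [RHS]mxE.
have := h (row i U) (submx_trans (row_sub i U) Up).
by rewrite /dotv -row_mul mxE.
Qed.

Lemma ext_basis s p u (U : 'M[R]_(s, n)) :
  (u <= p)%MS -> unitv u -> U *m U^T = 1%:M -> (U == perp_in p u)%MS ->
  col_mx u U *m (col_mx u U)^T = 1%:M /\ (col_mx u U == p)%MS.
Proof.
move=> up uu UU /andP[Up1 Up2].
have [Up Uu] : (U <= p)%MS /\ U *m u^T = 0.
  move: Up1; rewrite /perp_in sub_capmx sub_kermx => /andP[-> /eqP ->] //.
split.
  rewrite tr_col_mx mul_col_mx !mul_mx_row unit11 // UU Uu.
  have -> : u *m U^T = 0 by rewrite -(trmxK u) -trmx_mul Uu trmx0.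
  by rewrite (scalar_mx_block 1 s 1).
apply/andP; split; first by rewrite col_mx_sub up Up.
rewrite -addsmxE.
have -> : p = p *m u^T *m u + (p - p *m u^T *m u) by rewrite addrC subrK.
apply: addmx_sub_adds; first exact: submxMl.
apply: submx_trans Up2.
rewrite /perp_in sub_capmx sub_kermx; apply/andP; split.
  by rewrite addmx_sub // eqmx_opp (submx_trans (submxMl _ _) up).
by rewrite mulmxBl -!mulmxA unit11 // mulmx1 subrr.
Qed.

Lemma tr_blk s (a : R) (M : 'M[R]_s) :
  \tr (block_mx (a%:M : 'M_1) 0 0 M *m (block_mx (a%:M : 'M_1) 0 0 M)^T) = a ^+ 2 + \tr (M *m M^T).
Proof.
rewrite tr_block_mx !trmx0 tr_scalar_mx mulmx_block !mulmx0 !mul0mx !addr0 !add0r.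
by rewrite mxtrace_block -scalar_mxM mxtrace_scalar expr2.
Qed.

Lemma pa_basis p q ths : principal_angles p q ths ->
  exists U V : 'M[R]_(size ths, n), [/\ U *m U^T = 1%:M, V *m V^T = 1%:M,
    (U == p)%MS, (V == q)%MS &
    \tr (U *m V^T *m (U *m V^T)^T) = \sum_(t <- ths) cos t ^+ 2].
Proof.
elim=> {p q ths} [p q rp rq | p q u v th ths up vq uu uv hth hcos hmax _ [U [V [UU VV Ue Ve htr]]]].
  exists 0, 0; rewrite big_nil; split.
  - by rewrite /= [1%:M]flatmx0 mul0mx.
  - by rewrite /= [1%:M]flatmx0 mul0mx.
  - by move/eqP: rp; rewrite mxrank_eq0 => /eqP ->; rewrite /eqmx !sub0mx.
  - by move/eqP: rq; rewrite mxrank_eq0 => /eqP ->; rewrite /eqmx !sub0mx.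
  - by rewrite /mxtrace big_ord0.
have c0 : 0 <= cos th.
  apply: cos_ge0_pihalf; case/andP: hth => h1 h2; rewrite h2 andbT.
  by apply: le_trans h1; rewrite oppr_le0 divr_ge0 ?pi_ge0.
have [UU' Ue'] := @ext_basis _ p u U up uu UU Ue.
have [VV' Ve'] := @ext_basis _ q v V vq uv VV Ve.
exists (col_mx u U), (col_mx v V); split => //.
have Uv : U *m v^T = 0.
  case/andP: Ue => Ue1 _; apply: (@rows_perp _ U v _ Ue1) => w /perp_inP [wp wu].
  exact: (@perp p q u v (cos th) up vq uu uv c0 hcos hmax w wp wu).
have Vu : V *m u^T = 0.
  case/andP: Ve => Ve1 _; apply: (@rows_perp _ V u _ Ve1) => w /perp_inP [wq wv].
  apply: (@perp q p v u (cos th) vq up uv uu c0 _ _ w wq wv); first by rewrite dotvC.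
  by move=> u' v' h1 h2 h3 h4; rewrite dotvC; apply: hmax.
have uV : u *m V^T = 0 by rewrite -(trmxK u) -trmx_mul Vu trmx0.
have -> : col_mx u U *m (col_mx v V)^T = block_mx (cos th)%:M 0 0 (U *m V^T).
  rewrite tr_col_mx mul_col_mx !mul_mx_row uV Uv.
  by rewrite [u *m v^T]mx11_scalar -/(dotv u v) -hcos.
rewrite big_cons -htr; exact: tr_blk.
Qed.

Definition isproj p (P : 'M[R]_n) := [/\ P^T = P, (P <= p)%MS & p *m P = p].

Lemma isproj_uniq p P Q : isproj p P -> isproj p Q -> P = Q.
Proof.
move=> [PT Pp pP] [QT Qp pQ].
have PQ : P *m Q = P by case/submxP: Pp => D hD; rewrite hD -mulmxA pQ.
have QP : Q *m P = Q by case/submxP: Qp => D hD; rewrite hD -mulmxA pP.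
by rewrite -PT -PQ trmx_mul PT QT QP.
Qed.

Lemma isproj_idem p P : isproj p P -> P *m P = P.
Proof. by move=> [_ Pp pP]; case/submxP: (Pp) => D hD; rewrite {1}hD -mulmxA pP -hD. Qed.

Lemma basis_proj s p (U : 'M[R]_(s, n)) : U *m U^T = 1%:M -> (U == p)%MS ->
  [/\ isproj p (U^T *m U), \tr (U^T *m U) = s%:R & \rank p = s].
Proof.
move=> UU /andP[Up pU]; split.
- split; first by rewrite trmx_mul trmxK.
  + exact: submx_trans (submxMl _ _) Up.
  + by case/submxP: pU => D ->; rewrite -!mulmxA (mulmxA U) UU mul1mx.
- by rewrite mxtrace_mulC UU mxtrace1.
- rewrite -(@eqmx_rank _ _ _ _ U p); last by rewrite /eqmx Up pU.
  apply/eqP; rewrite eqn_leq rank_leq_row /=.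
  by rewrite -{1}(mxrank1 R s) -UU mxrankM_maxl.
Qed.

Lemma cos_sin_sum (ths : seq R) :
  \sum_(t <- ths) cos t ^+ 2 = (size ths)%:R - \sum_(t <- ths) sin t ^+ 2.
Proof.
elim: ths => [|t l IH]; first by rewrite !big_nil subr0.
by rewrite !big_cons IH sin2cos2 /= mulrS; ring.
Qed.

Lemma pair_info (m : nat) (delta : R) p q : \rank p = m -> 0 < delta ->
  delta <= chordal_dist p q ->
  exists P Q, [/\ isproj p P, isproj q Q, \tr P = m%:R, \tr (P *m Q) <= m%:R - delta ^+ 2
     & 0 <= \tr (P *m Q)].
Proof.
move=> rp d0 dd.
move: dd; rewrite /chordal_dist; set ths := xget _ _ => dd.
have hpa : principal_angles p q ths.
  have [[t ht]|nS] := pselect (exists t, principal_angles p q t).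
    by rewrite /ths; apply: xgetPex; exists t.
  move: dd; rewrite /ths xgetPN; last by move=> x hx; apply: nS; exists x.
  by rewrite big_nil sqrtr0 leNgt d0.
have [U [V [UU VV Ue Ve htr]]] := @pa_basis p q ths hpa.
have [PU trU rU] := @basis_proj _ p U UU Ue.
have [PV _ _] := @basis_proj _ q V VV Ve.
exists (U^T *m U), (V^T *m V); split => //.
  by rewrite trU -rU rp.
  have -> : \tr (U^T *m U *m (V^T *m V)) = \sum_(t <- ths) cos t ^+ 2.
    by rewrite -htr -mulmxA mxtrace_mulC trmx_mul trmxK !mulmxA.
  rewrite cos_sin_sum -rU rp lerD2l lerN2.
  have s0 : 0 <= \sum_(t <- ths) sin t ^+ 2 by apply: sumr_ge0 => t _; exact: sqr_ge0.
  rewrite -(sqr_sqrtr s0); have := ltW d0.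
  set r := Num.sqrt _ in dd *; move=> d0'; rewrite !expr2; nra.
have -> : \tr (U^T *m U *m (V^T *m V)) = \sum_(t <- ths) cos t ^+ 2.
  by rewrite -htr -mulmxA mxtrace_mulC trmx_mul trmxK !mulmxA.
by apply: sumr_ge0 => t _; exact: sqr_ge0.
Qed.
End A.
Arguments isproj {R n}.
Arguments pair_info {R n m delta p q}.
Arguments isproj_uniq {R n p P Q}.
Arguments isproj_idem {R n p P}.
Set Implicit Arguments. Unset Strict Implicit.
Section C.
Variable (R : realFieldType).

Section IP.
Variable (I : finType).
Definition ip (f g : I -> R) := \sum_p f p * g p.

Lemma lin4 (c1 c2 c3 c4 : R) (f1 f2 f3 f4 g : I -> R) :
  \sum_p (c1 * f1 p + c2 * f2 p + c3 * f3 p + c4 * f4 p) * g p =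
  c1 * ip f1 g + c2 * ip f2 g + c3 * ip f3 g + c4 * ip f4 g.
Proof.
rewrite /ip !mulr_sumr -!big_split /=; apply: eq_bigr => p _; ring.
Qed.

Lemma ipC f g : ip f g = ip g f.
Proof. by apply: eq_bigr => p _; rewrite mulrC. Qed.

Lemma cs4 (z f1 f2 f3 f4 : I -> R) (c1 c2 c3 c4 : R) :
  2 * (c1 * ip z f1 + c2 * ip z f2 + c3 * ip z f3 + c4 * ip z f4)
  - (c1 * (c1 * ip f1 f1 + c2 * ip f1 f2 + c3 * ip f1 f3 + c4 * ip f1 f4)
   + c2 * (c1 * ip f2 f1 + c2 * ip f2 f2 + c3 * ip f2 f3 + c4 * ip f2 f4)
   + c3 * (c1 * ip f3 f1 + c2 * ip f3 f2 + c3 * ip f3 f3 + c4 * ip f3 f4)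
   + c4 * (c1 * ip f4 f1 + c2 * ip f4 f2 + c3 * ip f4 f3 + c4 * ip f4 f4))
  <= ip z z.
Proof.
pose X p := c1 * f1 p + c2 * f2 p + c3 * f3 p + c4 * f4 p.
have h0 : 0 <= \sum_p (z p - X p) ^+ 2 by apply: sumr_ge0 => p _; exact: sqr_ge0.
have e1 : \sum_p (z p - X p) ^+ 2 = ip z z - 2 * \sum_p X p * z p + \sum_p X p * X p.
  rewrite /ip mulr_sumr -sumrB -big_split /=; apply: eq_bigr => p _; ring.
have e2 : \sum_p X p * z p = c1 * ip z f1 + c2 * ip z f2 + c3 * ip z f3 + c4 * ip z f4.
  by rewrite /X lin4 !(ipC z).
have e3 : \sum_p X p * X p = c1 * (c1 * ip f1 f1 + c2 * ip f1 f2 + c3 * ip f1 f3 + c4 * ip f1 f4)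
   + c2 * (c1 * ip f2 f1 + c2 * ip f2 f2 + c3 * ip f2 f3 + c4 * ip f2 f4)
   + c3 * (c1 * ip f3 f1 + c2 * ip f3 f2 + c3 * ip f3 f3 + c4 * ip f3 f4)
   + c4 * (c1 * ip f4 f1 + c2 * ip f4 f2 + c3 * ip f4 f3 + c4 * ip f4 f4).
  rewrite {2}/X lin4.
  have h : forall f, ip f X = c1 * ip f f1 + c2 * ip f f2 + c3 * ip f f3 + c4 * ip f f4.
    by move=> f; rewrite ipC /ip /X /= lin4 !(ipC _ f).
  by rewrite !h.
move: h0; rewrite e1 e2 e3; lra.
Qed.

Lemma sum_delta (i : I) (F : I -> R) : \sum_j (i == j)%:R * F j = F i.
Proof.
rewrite (bigD1 i) //= eqxx mul1r big1 ?addr0 // => j ji.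
by rewrite eq_sym (negbTE ji) mul0r.
Qed.
End IP.

Lemma sumP (I J : finType) (F : I * J -> R) : \sum_x F x = \sum_a \sum_b F (a, b).
Proof. by rewrite pair_bigA; apply: eq_bigr => -[a b]. Qed.

Lemma sum_delta_r (I : finType) (i : I) (F : I -> R) : \sum_j F j * (j == i)%:R = F i.
Proof. by rewrite -(sum_delta i F); apply: eq_bigr => j _; rewrite mulrC eq_sym. Qed.

Lemma sum_delta_l (I : finType) (i : I) (F : I -> R) : \sum_j F j * (i == j)%:R = F i.
Proof. by rewrite -(sum_delta i F); apply: eq_bigr => j _; rewrite mulrC. Qed.

Lemma sqr_sum (I : finType) (F : I -> R) : (\sum_i F i) ^+ 2 = \sum_i \sum_j F i * F j.
Proof. by rewrite expr2 mulr_suml; apply: eq_bigr => i _; rewrite mulr_sumr. Qed.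

Lemma sq_gram (I J : finType) (y : I -> J -> R) :
  \sum_x \sum_x' (\sum_i y i x * y i x') * (\sum_i y i x * y i x') =
  \sum_i \sum_j (\sum_x y i x * y j x) ^+ 2.
Proof.
under eq_bigr do under eq_bigr do rewrite -expr2 sqr_sum.
under [RHS]eq_bigr do under eq_bigr do rewrite sqr_sum.
under eq_bigr do rewrite exchange_big.
under eq_bigr do under eq_bigr do rewrite exchange_big.
rewrite exchange_big; apply: eq_bigr => i _.
rewrite exchange_big; apply: eq_bigr => j _.
apply: eq_bigr => x _; apply: eq_bigr => x' _; ring.
Qed.

Section Tens.
Variables (n k : nat) (Y : 'I_k -> 'M[R]_n) (al be : R).
Hypothesis Ysym : forall i a b, Y i a b = Y i b a.
Hypothesis Ytr : forall i, \sum_a Y i a a = 0.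
Hypothesis Ysq : forall i a c, \sum_b Y i a b * Y i c b = al * Y i a c + be * (a == c)%:R.

Local Notation T := ('I_n * 'I_n)%type.
Local Notation T2 := (T * T)%type.
Definition S := \sum_i Y i.
Definition zf (p : T2) := \sum_i Y i p.1.1 p.1.2 * Y i p.2.1 p.2.2.
Definition f1 (p : T2) : R := (p.1 == p.2)%:R.
Definition sw (x : T) : T := (x.2, x.1).
Definition f2 (p : T2) : R := (p.1 == sw p.2)%:R.
Definition f3 (p : T2) : R := (p.1.1 == p.1.2)%:R * (p.2.1 == p.2.2)%:R.
Definition f4 (p : T2) : R := S p.1.1 p.2.1 * (p.1.2 == p.2.2)%:R.
Definition Q := \sum_i \sum_a \sum_b Y i a b ^+ 2.
Definition N := \sum_a \sum_c S a c ^+ 2.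

Lemma SE a c : S a c = \sum_i Y i a c.
Proof. by rewrite /S summxE. Qed.

Lemma trS : \sum_a S a a = 0.
Proof. by under eq_bigr do rewrite SE; rewrite exchange_big big1 // => i _; rewrite Ytr. Qed.

Lemma ip_z1 : ip zf f1 = Q.
Proof.
rewrite /ip sumP /=; under eq_bigr do rewrite /f1 /= sum_delta_l.
rewrite /zf /= exchange_big /=; apply: eq_bigr => i _.
by rewrite sumP; apply: eq_bigr => a _; apply: eq_bigr => b _; rewrite expr2.
Qed.


Lemma ipP (f g : T2 -> R) : ip f g = \sum_x \sum_y f (x, y) * g (x, y).
Proof. by rewrite /ip sumP. Qed.

Lemma sum1n : \sum_(a : 'I_n) (1 : R) = n%:R.
Proof. by rewrite sumr_const card_ord. Qed.

Lemma sum1T : \sum_(x : T) (1 : R) = n%:R * n%:R.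
Proof. by rewrite sumr_const card_prod !card_ord natrM. Qed.

Lemma sum1 (I : finType) (i : I) : \sum_j ((i == j)%:R : R) = 1.
Proof. by rewrite -[RHS](sum_delta i (fun=> 1)); apply: eq_bigr => j _; rewrite mulr1. Qed.

Lemma swE x y : (x == sw y) = (sw x == y).
Proof. by case: x y => a b [c d]; rewrite /sw /= !xpair_eqE andbC. Qed.

Lemma dgsum : \sum_(x : T) ((x == sw x)%:R : R) = n%:R.
Proof.
rewrite sumP -[RHS]sum1n; apply: eq_bigr => a _.
by rewrite -[RHS](sum1 a); apply: eq_bigr => b _; rewrite /sw /= xpair_eqE (eq_sym b a) andbb.
Qed.

Lemma ip11 : ip f1 f1 = n%:R * n%:R.
Proof.
rewrite ipP -sum1T; apply: eq_bigr => x _.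
by rewrite /f1 /= sum_delta_l eqxx.
Qed.

Lemma ip12 : ip f1 f2 = n%:R.
Proof.
rewrite ipP -dgsum; apply: eq_bigr => x _.
by under eq_bigr do rewrite mulrC; rewrite /f1 /f2 /= sum_delta_l.
Qed.

Lemma ip22 : ip f2 f2 = n%:R * n%:R.
Proof.
rewrite ipP -sum1T; apply: eq_bigr => x _.
by under eq_bigr do rewrite /f2 /= swE; rewrite sum_delta_l eqxx.
Qed.

Lemma dgsum' : \sum_(x : T) ((x.1 == x.2)%:R * (x.1 == x.2)%:R : R) = n%:R.
Proof.
rewrite sumP -[RHS]sum1n; apply: eq_bigr => a _.
by rewrite -[RHS](sum1 a); apply: eq_bigr => b _; rewrite /= -natrM mulnb andbb.
Qed.

Lemma ip13 : ip f1 f3 = n%:R.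
Proof.
rewrite ipP -dgsum'; apply: eq_bigr => x _.
by under eq_bigr do rewrite mulrC; rewrite /f1 /f3 /= sum_delta_l.
Qed.

Lemma ip23 : ip f2 f3 = n%:R.
Proof.
rewrite ipP -dgsum'; apply: eq_bigr => x _.
under eq_bigr do rewrite mulrC /f2 /= swE; rewrite /f3 /= sum_delta_l /=.
by rewrite (eq_sym x.2) mulrC.
Qed.

Lemma ip33 : ip f3 f3 = n%:R * n%:R.
Proof.
rewrite ipP -dgsum' mulr_suml; apply: eq_bigr => x _.
by rewrite mulr_sumr; apply: eq_bigr => y _; rewrite /f3 /=; ring.
Qed.

Lemma ip14 : ip f1 f4 = 0.
Proof.
rewrite ipP.
under eq_bigr do (under eq_bigr do rewrite mulrC; rewrite /f1 /f4 /= sum_delta_l eqxx mulr1).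
by rewrite sumP exchange_big /= big1 // => b _; exact: trS.
Qed.

Lemma ip24 : ip f2 f4 = 0.
Proof.
rewrite ipP.
under eq_bigr do (under eq_bigr do rewrite mulrC /f2 /= swE; rewrite /f4 /= sum_delta_l /=).
rewrite sumP -[RHS]trS; apply: eq_bigr => a _ /=.
by rewrite sum_delta_r.
Qed.

Lemma ip34 : ip f3 f4 = 0.
Proof.
rewrite ipP sumP -[RHS]trS; apply: eq_bigr => a _.
rewrite -[RHS](sum_delta_l a (fun b => S a b)).
apply: eq_bigr => b _; rewrite sumP.
rewrite -[RHS](sum_delta_r b (fun c => S a c * (a == b)%:R)) /=.
apply: eq_bigr => c _; rewrite /f3 /f4 /=.
under eq_bigr do rewrite mulrA.
by rewrite sum_delta_l; ring.
Qed.

Lemma ip44 : ip f4 f4 = n%:R * N.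
Proof.
rewrite ipP sumP exchange_big /= -[in RHS]sum1n mulr_suml; apply: eq_bigr => b _.
rewrite mul1r /N; apply: eq_bigr => a _.
rewrite sumP; apply: eq_bigr => c _.
rewrite /f4 /=.
transitivity (\sum_d S a c ^+ 2 * (b == d)%:R * (b == d)%:R).
  by apply: eq_bigr => d _; rewrite expr2; ring.
by rewrite sum_delta_l eqxx mulr1.
Qed.


Lemma ip_zz : ip zf zf = \sum_i \sum_j (\sum_a \sum_b Y i a b * Y j a b) ^+ 2.
Proof.
rewrite ipP /zf /=.
rewrite (sq_gram (fun i (x : T) => Y i x.1 x.2)).
by apply: eq_bigr => i _; apply: eq_bigr => j _; rewrite sumP.
Qed.

Lemma ip_z2 : ip zf f2 = Q.
Proof.
rewrite ipP.
under eq_bigr do (under eq_bigr do rewrite /f2 /= swE; rewrite sum_delta_l).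
rewrite /zf /= exchange_big; apply: eq_bigr => i _.
rewrite sumP; apply: eq_bigr => a _; apply: eq_bigr => b _.
by rewrite /= (Ysym i b a) expr2.
Qed.

Lemma ip_z3 : ip zf f3 = 0.
Proof.
rewrite ipP big1 // => x _.
rewrite /zf /f3 /=.
under eq_bigr do rewrite mulr_suml.
rewrite exchange_big big1 // => i _.
have h : \sum_(y : T) Y i y.1 y.2 * (y.1 == y.2)%:R = 0.
  by rewrite sumP -[RHS](Ytr i); apply: eq_bigr => a _; rewrite sum_delta_l.
transitivity (Y i x.1 x.2 * (x.1 == x.2)%:R * \sum_(y : T) Y i y.1 y.2 * (y.1 == y.2)%:R);
  last by rewrite h mulr0.
by rewrite mulr_sumr; apply: eq_bigr => y _; ring.
Qed.

Lemma ip_z4 : ip zf f4 = al * N.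
Proof.
rewrite ipP sumP.
transitivity (\sum_a \sum_c S a c * (al * S a c + be * (a == c)%:R *+ k)).
  apply: eq_bigr => a _.
  transitivity (\sum_b \sum_c (\sum_i Y i a b * Y i c b) * S a c).
    apply: eq_bigr => b _; rewrite sumP; apply: eq_bigr => c _.
    rewrite /zf /f4 /=; under eq_bigr do rewrite mulrA.
    by rewrite sum_delta_l.
  rewrite exchange_big; apply: eq_bigr => c _.
  rewrite -mulr_suml exchange_big /= mulrC; congr (_ * _).
  under eq_bigr do rewrite Ysq.
  by rewrite big_split /= -mulr_sumr -SE sumr_const card_ord.
under eq_bigr do under eq_bigr do rewrite mulrDr.
under eq_bigr do rewrite big_split /=.
rewrite big_split /=.
have -> : \sum_a \sum_c S a c * (be * (a == c)%:R *+ k) = 0.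
  transitivity ((\sum_a S a a) * (be *+ k)); last by rewrite trS mul0r.
  rewrite mulr_suml; apply: eq_bigr => a _.
  transitivity (\sum_c S a c * (be *+ k) * (a == c)%:R).
    by apply: eq_bigr => c _; rewrite !mulrnAr mulrnAl !mulr1 mulrnAC.
  by rewrite sum_delta_l.
rewrite addr0 /N mulr_sumr; apply: eq_bigr => a _.
by rewrite mulr_sumr; apply: eq_bigr => c _; rewrite expr2; ring.
Qed.

Lemma key_ineq : (2 <= n)%N ->
  Q ^+ 2 / ((n%:R ^+ 2 + n%:R) / 2 - 1) + al ^+ 2 * N / n%:R <= ip zf zf.
Proof.
move=> n2; set D := (_ / 2 - 1).
have n0 : 0 < n%:R :> R by rewrite ltr0n; apply: leq_trans n2.
have n2' : 2 <= n%:R :> R by rewrite (ler_nat R 2 n).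
have D0 : 0 < D by rewrite /D; nra.
set a := Q / D; set b := al / n%:R.
have := cs4 zf f1 f2 f3 f4 (a / 2) (a / 2) (- (a / n%:R)) b.
rewrite ip_z1 ip_z2 ip_z3 ip_z4 ip11 ip12 ip13 ip14 ip22 ip23 ip24 ip33 ip34 ip44.
rewrite !(ipC f2 f1) !(ipC f3 f1) !(ipC f4 f1) !(ipC f3 f2) !(ipC f4 f2) !(ipC f4 f3).
rewrite ip12 ip13 ip14 ip23 ip24 ip34.
apply: le_trans; rewrite le_eqVlt; apply/orP; left; apply/eqP.
rewrite /a /b /D; field.
rewrite gt_eqF // /=; apply/eqP; nra.
Qed.

End Tens.
Lemma gram_sum (I J : finType) (y : I -> J -> R) :
  \sum_i \sum_j \sum_x y i x * y j x = \sum_x (\sum_i y i x) ^+ 2.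
Proof.
rewrite (eq_bigr (fun i => \sum_x \sum_j y i x * y j x)); last by move=> i _; rewrite exchange_big.
by rewrite exchange_big; apply: eq_bigr => x _; rewrite sqr_sum.
Qed.

Lemma lp (n k m : nat) (P : 'I_k -> 'M[R]_n) (s : R) :
  (2 <= n)%N ->
  (forall i, (P i)^T = P i) -> (forall i, P i *m P i = P i) ->
  (forall i, \tr (P i) = m%:R) ->
  (forall i j, i != j -> 0 <= \tr (P i *m P j) <= s) ->
  s <= (1 - 2 * (m%:R / n%:R)) ^+ 2 / n%:R + 2 * (m%:R ^+ 2 / n%:R) ->
  (k%:R * (m%:R * (n%:R - m%:R) / n%:R)) ^+ 2 / ((n%:R ^+ 2 + n%:R) / 2 - 1)
  + k%:R ^+ 2 * (m%:R ^+ 2 / n%:R) * (m%:R ^+ 2 / n%:R - s)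
  <= k%:R * (m%:R * (m%:R - s)).
Proof.
move=> n2 PT PP trP hij hs.
have n0 : 0 < n%:R :> R by rewrite ltr0n; apply: leq_trans n2.
pose c : R := m%:R / n%:R.
pose Y i := P i + (- c)%:M.
pose al : R := 1 - 2 * c; pose be : R := c - c * c.
have YE i a b : Y i a b = P i a b - c * (a == b)%:R by rewrite /Y !mxE mulr_natr mulNrn.
have Ysym i a b : Y i a b = Y i b a.
  by rewrite !YE -{1}(PT i) mxE eq_sym.
have Ytr i : \sum_a Y i a a = 0.
  change (\tr (Y i) = 0); rewrite /Y mxtraceD trP mxtrace_scalar /c mulNrn.
  by rewrite -[(_ / _) *+ n]mulr_natr divfK ?gt_eqF // subrr.
have YY i : Y i *m Y i = al *: Y i + be%:M.
  rewrite /Y mulmxDl !mulmxDr PP mul_mx_scalar mul_scalar_mx -scalar_mxM.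
  by apply/matrixP => a b; rewrite !mxE /al /be; ring.
have Ysq i a b : \sum_j Y i a j * Y i b j = al * Y i a b + be * (a == b)%:R.
  move/matrixP: (YY i) => /(_ a b); rewrite !mxE mulr_natr => <-.
  by apply: eq_bigr => j _; rewrite (Ysym i b j).
have key := @key_ineq n k Y al be Ysym Ytr Ysq n2.
rewrite ip_zz in key.
pose g := fun i j => \sum_a \sum_b Y i a b * Y j a b.
pose mu : R := c * c * n%:R.
have PY i : P i = Y i + c%:M.
  by apply/matrixP => a b; rewrite mxE YE mxE mulr_natr; ring.
have trY i : \tr (Y i) = 0 by exact: Ytr.
clearbody Y.
have G1 i j : \tr (P i *m P j) = g i j + mu.
  rewrite (PY i) (PY j) mulmxDl !mulmxDr mul_mx_scalar mul_scalar_mx -scalar_mxM.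
  rewrite !mxtraceD !mxtraceZ !trY mxtrace_scalar !mulr0 !addr0 add0r /mu mulr_natr; congr (_ + _).
  rewrite /mxtrace /g; apply: eq_bigr => a _; rewrite mxE; apply: eq_bigr => b _.
  by rewrite (Ysym j b a).
have G2 : \sum_i \sum_j g i j = N Y.
  rewrite /N /g.
  transitivity (\sum_i \sum_j \sum_(x : 'I_n * 'I_n) Y i x.1 x.2 * Y j x.1 x.2).
    by apply: eq_bigr => i _; apply: eq_bigr => j _; rewrite sumP.
  rewrite (gram_sum (fun i (x : 'I_n * 'I_n) => Y i x.1 x.2)) sumP.
  by apply: eq_bigr => a _; apply: eq_bigr => b _; rewrite SE.
have G3 : Q Y = k%:R * (m%:R - mu).
  transitivity (\sum_(i < k) (m%:R - mu)); last by rewrite sumr_const card_ord mulr_natl.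
  apply: eq_bigr => i _; have := G1 i i; rewrite PP trP => ->; rewrite addrK /g.
  by apply: eq_bigr => a _; apply: eq_bigr => b _; rewrite expr2.
have N0 : 0 <= N Y by apply: sumr_ge0 => a _; apply: sumr_ge0 => b _; exact: sqr_ge0.
pose F (t : R) := t * (t - s).
have up : \sum_i \sum_j F (\tr (P i *m P j)) <= k%:R * (m%:R * (m%:R - s)).
  apply: (@le_trans _ _ (\sum_(i < k) m%:R * (m%:R - s))); last first.
  by rewrite sumr_const card_ord -[_ *+ k]mulr_natl.
  apply: ler_sum => i _; rewrite (bigD1 i) //= PP trP -[X in _ <= X]addr0 lerD2l.
  apply: sumr_le0 => j ji.
  have /andP[h1 h2] : 0 <= \tr (P i *m P j) <= s by apply: hij; rewrite eq_sym.
  rewrite /F; apply: mulr_ge0_le0 => //; rewrite subr_le0 //.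
have sumk (x : R) : \sum_(j < k) x = k%:R * x by rewrite sumr_const card_ord mulr_natl.
have e1 i : \sum_j F (\tr (P i *m P j)) =
    \sum_j g i j ^+ 2 + (2 * mu - s) * \sum_j g i j + k%:R * (mu * (mu - s)).
  rewrite mulr_sumr -(sumk (mu * (mu - s))) -!big_split /=.
  by apply: eq_bigr => j _; rewrite G1 /F; ring.
have low : \sum_i \sum_j F (\tr (P i *m P j)) =
    \sum_i \sum_j g i j ^+ 2 + (2 * mu - s) * N Y + k%:R ^+ 2 * (mu * (mu - s)).
  under eq_bigr do rewrite e1.
  rewrite -G2 mulr_sumr expr2 -mulrA -(sumk (k%:R * (mu * (mu - s)))) -!big_split /=.
  by apply: eq_bigr => i _.
have key' : Q Y ^+ 2 / ((n%:R ^+ 2 + n%:R) / 2 - 1) + al ^+ 2 * N Y / n%:R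
   <= \sum_i \sum_j g i j ^+ 2 := key.
have muE : m%:R ^+ 2 / n%:R = mu by rewrite /mu /c; field; rewrite gt_eqF.
have mE : m%:R * (n%:R - m%:R) / n%:R = m%:R - mu by rewrite -muE; field; rewrite gt_eqF.
rewrite muE -/c -/al in hs.
rewrite mE muE -G3.
have eN : al ^+ 2 * N Y / n%:R = al ^+ 2 / n%:R * N Y by rewrite mulrAC.
rewrite eN in key'.
have hp : 0 <= (al ^+ 2 / n%:R + 2 * mu - s) * N Y by apply: mulr_ge0 => //; lra.
move: up; rewrite low => up.
lra.
Qed.
End C.
Unset Implicit Arguments.
Section Num.
Variable R : realFieldType.

Lemma A_le (m n : nat) : (1 <= m)%N -> (2 * m <= n)%N ->
  2 * (n%:R - m%:R) ^+ 2 / (n%:R * (n%:R - 1) * (n%:R + 2)) <=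
  m%:R ^+ 2 / n%:R + (1 - 2 * (m%:R / n%:R)) ^+ 2 / n%:R :> R.
Proof.
move=> m1 mn.
have hm : 1 <= m%:R :> R by rewrite (ler_nat R 1 m).
have hn : 2 * m%:R <= n%:R :> R by rewrite -(natrM R 2 m) ler_nat.
have n0 : 0 < n%:R :> R by lra.
have d0 : 0 < n%:R * (n%:R - 1) * (n%:R + 2) :> R by apply: mulr_gt0; [apply: mulr_gt0|]; lra.
rewrite ler_pdivrMr //.
have -> : (m%:R ^+ 2 / n%:R + (1 - 2 * (m%:R / n%:R)) ^+ 2 / n%:R) * (n%:R * (n%:R - 1) * (n%:R + 2))
   = (m%:R ^+ 2 + (n%:R - 2 * m%:R) ^+ 2 / n%:R ^+ 2) * ((n%:R - 1) * (n%:R + 2)) :> R.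
  by field; rewrite gt_eqF.
set x := m%:R in hm hn *; set y := n%:R in hn n0 d0 *.
have e : 0 <= (y - 2 * x) ^+ 2 / y ^+ 2 by apply: divr_ge0; apply: sqr_ge0.
case: (leqP 2 m) => hm2.
  have hx2 : 2 <= x by rewrite /x (ler_nat R 2 m).
  set E := (y - 2 * x) ^+ 2 / y ^+ 2 in e *.
  set F := (y - 1) * (y + 2).
  have F0 : 0 <= F by rewrite /F; nra.
  have h0 : 0 <= E * F by apply: mulr_ge0.
  have h1 : (y - x) ^+ 2 <= y ^+ 2 by nra.
  have h2 : 4 * F <= x ^+ 2 * F by apply: ler_wpM2r => //; nra.
  have h3 : 2 * y ^+ 2 <= 4 * F by rewrite /F; nra.
  rewrite mulrDl; lra.
have m1' : m = 1%N by apply/eqP; rewrite eqn_leq m1 -ltnS hm2.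
have x1 : x = 1 by rewrite /x m1'.
rewrite x1.
have -> : (y - 2 * 1) ^+ 2 / y ^+ 2 = (y - 2) ^+ 2 / y ^+ 2 by rewrite mulr1.
have h : (y - 2) ^+ 2 / y ^+ 2 * ((y - 1) * (y + 2)) * y ^+ 2 = (y - 2) ^+ 2 * ((y - 1) * (y + 2)).
  by field; rewrite gt_eqF.
have y2 : 2 <= y by lra.
have P : 2 * (y - 1) ^+ 2 * y ^+ 2 <= (y - 1) * (y + 2) * y ^+ 2 + (y - 2) ^+ 2 * ((y - 1) * (y + 2)).
  have q : 0 <= (y - 1) * (2 * y ^+ 2 - 4 * y + 8) by apply: mulr_ge0; nra.
  have e2 : (y - 1) * (y + 2) * y ^+ 2 + (y - 2) ^+ 2 * ((y - 1) * (y + 2)) - 2 * (y - 1) ^+ 2 * y ^+ 2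
     = (y - 1) * (2 * y ^+ 2 - 4 * y + 8) by ring.
  by rewrite -subr_ge0 e2.
have yy : 0 < y ^+ 2 by apply: exprn_gt0.
rewrite -(ler_pM2r yy).
have e3 : (1 ^+ 2 + (y - 2) ^+ 2 / y ^+ 2) * ((y - 1) * (y + 2)) * y ^+ 2 =
  (y - 1) * (y + 2) * y ^+ 2 + (y - 2) ^+ 2 * ((y - 1) * (y + 2)).
  by field; rewrite gt_eqF.
by rewrite e3.
Qed.

Lemma conv (m n : nat) (K s : R) : (1 <= m)%N -> (2 * m <= n)%N ->
  0 < s -> s < m%:R ^+ 2 / n%:R + 2 * (n%:R - m%:R) ^+ 2 / (n%:R * (n%:R - 1) * (n%:R + 2)) ->
  K * (m%:R ^+ 2 / n%:R * (m%:R ^+ 2 / n%:R + 2 * (n%:R - m%:R) ^+ 2 / (n%:R * (n%:R - 1) * (n%:R + 2)) - s))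
    <= m%:R * (m%:R - s) ->
  K <= n%:R / m%:R * ((m%:R - s) /
            (- s + m%:R ^+ 2 / n%:R
             + 2 * (n%:R - m%:R) ^+ 2 / (n%:R * (n%:R - 1) * (n%:R + 2)))).
Proof.
move=> m1 mn s0 sA H.
have hm : 1 <= m%:R :> R by rewrite (ler_nat R 1 m).
have hn : 2 * m%:R <= n%:R :> R by rewrite -(natrM R 2 m) ler_nat.
set A := m%:R ^+ 2 / n%:R + _ in sA H *.
have mu0 : 0 < m%:R ^+ 2 / n%:R :> R by apply: divr_gt0; [apply: exprn_gt0|]; lra.
have As : 0 < - s + A by lra.
have -> : - s + m%:R ^+ 2 / n%:R + 2 * (n%:R - m%:R) ^+ 2 / (n%:R * (n%:R - 1) * (n%:R + 2)) = - s + A.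
  by rewrite /A; ring.
have -> : n%:R / m%:R * ((m%:R - s) / (- s + A)) = m%:R * (m%:R - s) / (m%:R ^+ 2 / n%:R * (A - s)).
  by field; rewrite !gt_eqF //; lra.
rewrite ler_pdivlMr; last by apply: mulr_gt0 => //; lra.
by [].
Qed.

Lemma A_le_m (m n : nat) : (1 <= m)%N -> (2 * m <= n)%N ->
  m%:R ^+ 2 / n%:R + 2 * (n%:R - m%:R) ^+ 2 / (n%:R * (n%:R - 1) * (n%:R + 2)) <= m%:R :> R.
Proof.
move=> m1 mn.
have hm : 1 <= m%:R :> R by rewrite (ler_nat R 1 m).
have hn : 2 * m%:R <= n%:R :> R by rewrite -(natrM R 2 m) ler_nat.
have n0 : 0 < n%:R :> R by lra.
have d0 : 0 < n%:R * (n%:R - 1) * (n%:R + 2) :> R by apply: mulr_gt0; [apply: mulr_gt0|]; lra.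
have h1 : m%:R ^+ 2 / n%:R <= m%:R / 2 :> R.
  rewrite ler_pdivrMr // mulrAC ler_pdivlMr //; nra.
have h2 : 2 * (n%:R - m%:R) ^+ 2 / (n%:R * (n%:R - 1) * (n%:R + 2)) <= 1 / 2 :> R.
  rewrite ler_pdivrMr // mulrAC ler_pdivlMr //.
  have : (n%:R - m%:R) ^+ 2 <= (n%:R - 1) ^+ 2 :> R by nra.
  nra.
lra.
Qed.
End Num.

Theorem theorem3p1 (R : realType) (m n : nat) (delta : R)
  (hm1 : (1 <= m)%N) (hmn : (2 * m <= n)%N) (hdelta : 0 < delta)
  (hs0 : 0 < m%:R - delta ^+ 2)
  (hs1 : m%:R - delta ^+ 2 < (m%:R ^+ 2 / n%:R
          + 2 * (n%:R - m%:R) ^+ 2 / (n%:R * (n%:R - 1) * (n%:R + 2))))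
  (k : nat) (C : 'I_k -> 'M[R]_n) :
  delta_code m delta C ->
  k%:R <= n%:R / m%:R * ((m%:R - (m%:R - delta ^+ 2)) /
            (- (m%:R - delta ^+ 2) + m%:R ^+ 2 / n%:R
             + 2 * (n%:R - m%:R) ^+ 2 / (n%:R * (n%:R - 1) * (n%:R + 2)))).
Proof.
move=> [hg [_ hd]].
have hm : 1 <= m%:R :> R by rewrite (ler_nat R 1 m).
have hn : 2 * m%:R <= n%:R :> R by rewrite -(natrM R 2 m) ler_nat.
have n2 : (2 <= n)%N by apply: leq_trans hmn; rewrite leq_pmulr.
have n0 : 0 < n%:R :> R by lra.
set s := m%:R - delta ^+ 2 in hs0 hs1 *.
have d2 : 0 < delta ^+ 2 by apply: exprn_gt0.
have s_m : s < m%:R by rewrite /s; lra.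
apply: (@conv R m n k%:R s hm1 hmn hs0 hs1).
set A := _ + _ in hs1 *.
have mu0 : 0 < m%:R ^+ 2 / n%:R :> R by apply: divr_gt0; [apply: exprn_gt0|]; lra.
case: k C hg hd => [|[|k']] C hg hd.
- rewrite mul0r; apply: mulr_ge0; lra.
- have := @A_le_m R m n hm1 hmn; rewrite -/A => Am.
  have mu_m : m%:R ^+ 2 / n%:R <= m%:R :> R.
    rewrite ler_pdivrMr //; nra.
  rewrite mul1r; apply: ler_pM => //; lra.
set k := k'.+2.
have ex : forall i : 'I_k, exists P, isproj (C i) P /\ \tr P = m%:R.
  move=> i; pose j : 'I_k := if i == ord0 then ord_max else ord0.
  have ij : i != j.
    rewrite /j; case: ifP => [/eqP -> | /negbT //]; apply/eqP => /(congr1 val) /=.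
    by [].
  have [P [Q [hP _ trP _ _]]] := pair_info (hg i) hdelta (hd i j ij).
  by exists P.
case: (choice ex) => P hP.
have hij : forall i j, i != j -> 0 <= \tr (P i *m P j) <= s.
  move=> i j ij.
  have [P' [Q' [hP' hQ' _ h1 h2]]] := pair_info (hg i) hdelta (hd i j ij).
  rewrite -(isproj_uniq hP' (hP i).1) -(isproj_uniq hQ' (hP j).1) h2.
  exact: h1.
have hs : s <= (1 - 2 * (m%:R / n%:R)) ^+ 2 / n%:R + 2 * (m%:R ^+ 2 / n%:R).
  have := @A_le R m n hm1 hmn; move: hs1; rewrite /A; lra.
have PT i : (P i)^T = P i by case: (hP i) => -[].
have PP i : P i *m P i = P i by case: (hP i) => /isproj_idem.
have trP i : \tr (P i) = m%:R by case: (hP i).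
have lpres := @lp R n k m P s n2 PT PP trP hij hs.
have K0 : 0 < k%:R :> R by rewrite ltr0n.
rewrite -(ler_pM2l K0).
apply: le_trans lpres; rewrite le_eqVlt; apply/orP; left; apply/eqP.
rewrite /A; field.
have n2' : 2 <= n%:R :> R by lra.
by apply/and4P; split; apply/eqP; nra.
Qed.
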